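(* Let $H$ be a real or complex Hilbert space of dimension $n$, let $N\ge n$, let $F=\{f_i\}_{i=1}^N$ be a frame for $H$ with frame operator $S_F$, and let $\{q_i\}_{i=1}^N$ be the weight number sequence. Set $c=\max\{q_i\|S_F^{-1/2}f_i\|^2:1\le i\le N\}$, $\Upsilon_1=\{i: q_i\|S_F^{-1/2}f_i\|^2=c\}$, $\Upsilon_2=\{1,\dots,N\}\setminus\Upsilon_1$, and $H_j=\operatorname{span}\{f_i: i\in\Upsilon_j\}$ for $j=1,2$. If $H_1\cap H_2=\{0\}$, then the canonical dual $\{S_F^{-1}f_i\}_{i=1}^N$ is a 1-erasure probabilistic spectrally optimal dual of $F$.
   Context: Inner products are linear in the first argument. A frame for the $n$-dimensional space $H$ is a finite sequence spanning $H$. Analysis operator: $\Theta_F f=(\langle f,f_i\rangle)_i$. Synthesis operator: $\Theta_F^*(c)=\sum_i c_if_i$. Frame operator: $S_F=\Theta_F^*\Theta_F$, which is positive and invertible. A dual frame of $F$ is a frame $G=\{g_i\}_{i=1}^N$ with $f=\sum_i\langle f,f_i\rangle g_i=\sum_i\langle f,g_i\rangle f_i$ for all $f\in H$. A probability sequence $\{p_i\}_{i=1}^N$ satisfies $0\le p_i\le1$ and $\sum p_i=1$. The weight numbers are $q_i=\frac{\sum_j p_j}{\sum_j p_j-p_i}\cdot\frac{N-1}{n}$ (assumed well defined). $\mathcal{D}_1^p$ is the set of $N\times N$ diagonal matrices having exactly one nonzero diagonal entry, that entry being $q_i$ in position $(i,i)$. $\mathcal{R}_1^p(F,G)=\max\{\rho(\Theta_G^*D\Theta_F):D\in\mathcal{D}_1^p\}$,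 where $\rho$ is spectral radius. A dual $G$ of $F$ is a 1-erasure probabilistic spectrally optimal dual of $F$ if $\mathcal{R}_1^p(F,G)=\inf\{\mathcal{R}_1^p(F,G'): G' \text{ a dual frame of } F\}$. *)

(* Defs.v *)
From HB Require Import structures.
From mathcomp Require Import all_boot all_order all_algebra.
Set Implicit Arguments. Unset Strict Implicit. Unset Printing Implicit Defensive.
Import Order.TTheory GRing.Theory Num.Theory.
Local Open Scope ring_scope.

(* H is modelled as K^n (column vectors) inside C^n, C a numeric closed field
   (e.g. the complex numbers); K = C (complex case) or K = real elements of C
   (real case, when realcase = true). *)
Section Frames.
Variable C : numClosedFieldType.

Definition adjmx m n (A : 'M[C]_(m, n)) : 'M[C]_(n, m) := (map_mx Num.conj A)^T.

(* inner product, linear in the first argument: <x,y> = y^* x *)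
Definition inner n (x y : 'cV[C]_n) : C := (adjmx y *m x) 0 0.

Definition in_space (realcase : bool) n (x : 'cV[C]_n) : Prop :=
  realcase -> forall j, x j 0 \is Num.real.

Definition span_of n N (f : 'I_N -> 'cV[C]_n) (A : {set 'I_N}) : 'M[C]_n :=
  (\sum_(i in A) <<(f i)^T>>)%MS.

Definition is_frame (realcase : bool) n N (f : 'I_N -> 'cV[C]_n) : Prop :=
  (forall i, in_space realcase (f i)) /\ (1%:M <= span_of f setT)%MS.

(* analysis operator Theta_F x = (<x, f_i>)_i *)
Definition analysis n N (f : 'I_N -> 'cV[C]_n) : 'M[C]_(N, n) :=
  \matrix_(i < N, j < n) (f i j 0)^*.

Definition synthesis n N (f : 'I_N -> 'cV[C]_n) : 'M[C]_(n, N) :=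
  adjmx (analysis f).

Definition frame_op n N (f : 'I_N -> 'cV[C]_n) : 'M[C]_n :=
  synthesis f *m analysis f.

Definition is_dual (realcase : bool) n N (f g : 'I_N -> 'cV[C]_n) : Prop :=
  is_frame realcase g /\
  forall x, in_space realcase x ->
    x = \sum_i inner x (f i) *: g i /\ x = \sum_i inner x (g i) *: f i.

Definition prob_seq N (p : 'I_N -> C) : Prop :=
  (forall i, 0 <= p i <= 1) /\ \sum_i p i = 1.

Definition weight n N (p : 'I_N -> C) (i : 'I_N) : C :=
  (\sum_j p j) / (\sum_j p j - p i) * ((N%:R - 1) / n%:R).

Definition Dmat n N (p : 'I_N -> C) (i : 'I_N) : 'M[C]_N :=
  \matrix_(j, k) (if (j == i) && (k == i) then weight n p i else 0).

Definition spectrum n (A : 'M[C]_n) : seq C :=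
  sval (closed_field_poly_normal (char_poly A)).

Lemma spectrumE n (A : 'M[C]_n) a : eigenvalue A a = (a \in spectrum A).
Proof.
rewrite /spectrum; case: (closed_field_poly_normal (char_poly A)) => rs /= Hrs.
rewrite (monicP (char_poly_monic A)) scale1r in Hrs.
by rewrite eigenvalue_root_char Hrs root_prod_XsubC.
Qed.

Definition spec_rad n (A : 'M[C]_n) : C := \big[Num.max/0]_(a <- spectrum A) `|a|.

Definition R1p n N (p : 'I_N -> C) (f g : 'I_N -> 'cV[C]_n) : C :=
  \big[Num.max/0]_(i < N) spec_rad (synthesis g *m Dmat n p i *m analysis f).

(* G is a 1-erasure probabilistic spectrally optimal dual of F:
   G is a dual and R_1^p(F,G) is the infimum of R_1^p(F,G') over duals G'
   (i.e. it is attained at G: a lower bound belonging to the set). *)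
Definition prob_spec_opt_dual (realcase : bool) n N (p : 'I_N -> C)
    (f g : 'I_N -> 'cV[C]_n) : Prop :=
  is_dual realcase f g /\
  forall g', is_dual realcase f g' -> R1p p f g <= R1p p f g'.

Definition is_pos_sqrt n (T M : 'M[C]_n) : Prop :=
  adjmx T = T /\ (forall x : 'cV[C]_n, 0 <= inner (T *m x) x) /\ T *m T = M.

End Frames.

(* Main.v *)
Require Import Defs.
From HB Require Import structures.
From mathcomp Require Import all_boot all_order all_algebra.
Set Implicit Arguments. Unset Strict Implicit. Unset Printing Implicit Defensive.
Import Order.TTheory GRing.Theory Num.Theory.
Local Open Scope ring_scope.

Lemma adjmxE (C : numClosedFieldType) m n (A : 'M[C]_(m, n)) i j :
  adjmx A i j = (A j i)^*.
Proof. by rewrite /adjmx !mxE. Qed.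

Lemma adjmxK (C : numClosedFieldType) m n (A : 'M[C]_(m, n)) : adjmx (adjmx A) = A.
Proof. by apply/matrixP => i j; rewrite !adjmxE conjCK. Qed.

Lemma adjmxM (C : numClosedFieldType) m n k (A : 'M[C]_(m, n)) (B : 'M[C]_(n, k)) :
  adjmx (A *m B) = adjmx B *m adjmx A.
Proof. by rewrite /adjmx map_mxM trmx_mul. Qed.

Lemma adjmxD (C : numClosedFieldType) m n (A B : 'M[C]_(m, n)) :
  adjmx (A + B) = adjmx A + adjmx B.
Proof. by apply/matrixP => i j; rewrite !mxE /= rmorphD. Qed.

Lemma adjmx_inv (C : numClosedFieldType) n (A : 'M[C]_n) :
  adjmx (invmx A) = invmx (adjmx A).
Proof. by rewrite /adjmx map_invmx trmx_inv. Qed.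

Lemma innerE (C : numClosedFieldType) n (x y : 'cV[C]_n) :
  inner x y = \sum_j x j 0 * (y j 0)^*.
Proof. by rewrite /inner mxE; apply: eq_bigr => j _; rewrite adjmxE mulrC. Qed.

Lemma inner_conj (C : numClosedFieldType) n (x y : 'cV[C]_n) :
  (inner x y)^* = inner y x.
Proof.
rewrite !innerE rmorph_sum; apply: eq_bigr => j _.
by rewrite rmorphM /= conjCK mulrC.
Qed.

Lemma inner_ge0 (C : numClosedFieldType) n (x : 'cV[C]_n) : 0 <= inner x x.
Proof. by rewrite innerE; apply: sumr_ge0 => j _; apply: mul_conjC_ge0. Qed.

Lemma synth_analysis (C : numClosedFieldType) n N (g f : 'I_N -> 'cV[C]_n) :
  synthesis g *m analysis f = \sum_i g i *m adjmx (f i).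
Proof.
apply/matrixP => j k; rewrite !mxE summxE; apply: eq_bigr => i _.
by rewrite /synthesis !adjmxE !mxE big_ord1 adjmxE conjCK.
Qed.

Lemma scal11 (C : numClosedFieldType) n (k : 'cV[C]_n) (y : 'M[C]_1) :
  k *m y = y 0 0 *: k.
Proof. by rewrite {1}[y]mx11_scalar mul_mx_scalar. Qed.

Lemma sum_inner (C : numClosedFieldType) n N (x : 'cV[C]_n) (h k : 'I_N -> 'cV[C]_n) :
  \sum_i inner x (h i) *: k i = (\sum_i k i *m adjmx (h i)) *m x.
Proof.
rewrite mulmx_suml; apply: eq_bigr => i _.
by rewrite -mulmxA scal11.
Qed.

Lemma Mi_formula (C : numClosedFieldType) n N (p : 'I_N -> C) (g f : 'I_N -> 'cV[C]_n) i :
  synthesis g *m Dmat n p i *m analysis f = weight n p i *: (g i *m adjmx (f i)).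
Proof.
apply/matrixP => j k; rewrite !mxE.
rewrite (bigD1 i) //= big1 ?addr0; last first.
  move=> l hl; rewrite !mxE big1 ?mul0r // => m _; rewrite !mxE.
  by rewrite (negbTE hl) andbF mulr0.
rewrite !mxE (bigD1 i) //= big1 ?addr0; last first.
  by move=> m hm; rewrite !mxE (negbTE hm) eqxx /= mulr0.
rewrite big_ord1 /synthesis /Dmat !adjmxE !mxE !eqxx /= conjCK.
by rewrite [_ * weight _ _ _]mulrC mulrA. Qed.

Lemma maxC_prop (C : numClosedFieldType) (x y : C) : 0 <= x -> 0 <= y ->
  [/\ x <= Num.max x y, y <= Num.max x y,
      (forall b, x <= b -> y <= b -> Num.max x y <= b) &
      (Num.max x y = x \/ Num.max x y = y)].
Proof.
move=> hx hy.
have rx := ger0_real hx; have ry := ger0_real hy.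
rewrite /Order.max; case: ifP => hxy.
  split => //; [exact: ltW | by right].
have hyx : y <= x by rewrite real_leNgt // hxy.
by split => //; left.
Qed.

Lemma bigmax_props (C : numClosedFieldType) (I : eqType) (r : seq I) (F : I -> C) :
  (forall i, 0 <= F i) ->
  let m := \big[Num.max/0]_(i <- r) F i in
  [/\ 0 <= m, (forall i, i \in r -> F i <= m),
      (forall b, 0 <= b -> (forall i, i \in r -> F i <= b) -> m <= b) &
      (m = 0 \/ exists2 i, i \in r & m = F i)].
Proof.
move=> F0 /=; elim: r => [|a r [IH0 IH1 IH2 IH3]].
  rewrite big_nil; split => //; by left.
rewrite big_cons.
have [h1 h2 h3 h4] := maxC_prop (F0 a) IH0.
split.
- exact: le_trans h1.
- move=> i; rewrite in_cons => /orP [/eqP -> //| /IH1 hi]; exact: le_trans h2.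
- move=> b b0 hb; apply: h3; first by apply: hb; rewrite mem_head.
  by apply: IH2 => // i hi; apply: hb; rewrite in_cons hi orbT.
- case: h4 => ->; first by right; exists a => //; rewrite mem_head.
  case: IH3 => [->|[i hi ->]]; first by left.
  by right; exists i => //; rewrite in_cons hi orbT.
Qed.

Lemma eigen_tr (F : fieldType) n (A : 'M[F]_n) a :
  eigenvalue A a = eigenvalue A^T a.
Proof.
rewrite /eigenvalue /eigenspace !kermx_eq0 !row_free_unit.
have -> : (A^T - a%:M) = (A - a%:M)^T by rewrite linearB /= tr_scalar_mx.
by rewrite unitmx_tr.
Qed.

Lemma eig_colP (F : fieldType) n (A : 'M[F]_n) a :
  eigenvalue A a <-> exists2 x : 'cV_n, A *m x = a *: x & x != 0.
Proof.
rewrite eigen_tr; split.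
  move/eigenvalueP => [v hv v0]; exists v^T; last by rewrite trmx_eq0.
  by apply: trmx_inj; rewrite trmx_mul trmxK hv linearZ /= trmxK.
move=> [x hx x0]; apply/eigenvalueP; exists x^T; last by rewrite trmx_eq0.
by rewrite -trmx_mul hx linearZ.
Qed.

Lemma spec_rad_ge (C : numClosedFieldType) n (A : 'M[C]_n) a :
  eigenvalue A a -> `|a| <= spec_rad A.
Proof.
rewrite spectrumE /spec_rad => ha.
have [_ h _ _] := bigmax_props (spectrum A) (fun a : C => normr_ge0 a).
exact: h.
Qed.

Lemma spec_rad_le (C : numClosedFieldType) n (A : 'M[C]_n) b :
  0 <= b -> (forall a, eigenvalue A a -> `|a| <= b) -> spec_rad A <= b.
Proof.
move=> b0 hb; have [_ _ h _] := bigmax_props (spectrum A) (fun a : C => normr_ge0 a).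
by apply: h => // a; rewrite -spectrumE; apply: hb.
Qed.

Lemma spec_rad_ge0 (C : numClosedFieldType) n (A : 'M[C]_n) : 0 <= spec_rad A.
Proof. by have [h _ _ _] := bigmax_props (spectrum A) (fun a : C => normr_ge0 a). Qed.

Lemma span_ann (C : numClosedFieldType) n N (f : 'I_N -> 'cV[C]_n) (x : 'cV[C]_n) :
  (1%:M <= span_of f setT)%MS -> (forall i, (f i)^T *m x = 0) -> x = 0.
Proof.
move=> h1 hx.
have : (span_of f setT <= kermx x)%MS.
  apply/sumsmx_subP => i _; rewrite genmxE; exact/sub_kermxP.
move=> /(submx_trans h1) /sub_kermxP; by rewrite mul1mx.
Qed.

Lemma ann_span (C : numClosedFieldType) n N (f : 'I_N -> 'cV[C]_n) :
  (forall x : 'cV[C]_n, (forall i, (f i)^T *m x = 0) -> x = 0) ->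
  (1%:M <= span_of f setT)%MS.
Proof.
move=> h; rewrite submxE mul1mx; apply/eqP/matrixP => j k.
have : col k (cokermx (span_of f setT)) = 0.
  apply: h => i; rewrite colE mulmxA.
  have /eqP -> : (f i)^T *m cokermx (span_of f setT) == 0.
    rewrite -submxE; apply: (sumsmx_sup i) => //; rewrite genmxE; exact: submx_refl.
  by rewrite mul0mx.
by move/matrixP => /(_ j 0); rewrite !mxE.
Qed.

Lemma frame_op_unit (C : numClosedFieldType) n N (f : 'I_N -> 'cV[C]_n) :
  (1%:M <= span_of f setT)%MS -> frame_op f \in unitmx.
Proof.
move=> h1; rewrite -row_free_unit -kermx_eq0; apply/eqP/row_matrixP => j.
rewrite row0; set v := row j _.
have hv : v *m frame_op f = 0 by rewrite /v -row_mul mulmx_ker row0.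
have : (v *m frame_op f *m adjmx v) 0 0 = 0 by rewrite hv mul0mx mxE.
rewrite /frame_op synth_analysis mulmx_sumr mulmx_suml summxE.
have hterm : forall i, (v *m (f i *m adjmx (f i)) *m adjmx v) 0 0
      = (v *m f i) 0 0 * ((v *m f i) 0 0)^*.
  move=> i; rewrite mulmxA -mulmxA -adjmxM.
  by rewrite mxE big_ord1 adjmxE.
under eq_bigr do rewrite hterm.
move/eqP; rewrite psumr_eq0; last by move=> i _; apply: mul_conjC_ge0.
move/allP => hall.
have hz : forall i, (f i)^T *m v^T = 0.
  move=> i; have := hall i (mem_index_enum i); rewrite /= mul_conjC_eq0 => /eqP h0.
  apply/matrixP => a b; rewrite [a]ord1 [b]ord1 -trmx_mul !mxE.
  by rewrite mxE in h0 *; rewrite h0.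
have := span_ann h1 hz; move/matrixP => h; apply/rowP => k.
by have := h k 0; rewrite !mxE.
Qed.

Lemma det_real (C : numClosedFieldType) n (A : 'M[C]_n) :
  (forall i j, A i j \is Num.real) -> \det A \is Num.real.
Proof.
move=> hA; rewrite /determinant; apply: rpred_sum => s _.
apply: rpredM; first by by apply: rpredX; rewrite realN real1.
by apply: rpred_prod => i _; apply: hA.
Qed.

Lemma invmx_real (C : numClosedFieldType) n (A : 'M[C]_n) :
  (forall i j, A i j \is Num.real) -> forall i j, invmx A i j \is Num.real.
Proof.
move=> hA i j; rewrite /invmx; case: ifP => _; last exact: hA.
rewrite !mxE; apply: rpredM; first by rewrite realV; apply: det_real.
rewrite /cofactor; apply: rpredM; first by by apply: rpredX; rewrite realN real1.
by apply: det_real => a b; rewrite !mxE; apply: hA.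
Qed.

Lemma frame_op_real (C : numClosedFieldType) n N (f : 'I_N -> 'cV[C]_n) :
  (forall i j, f i j 0 \is Num.real) -> forall j k, frame_op f j k \is Num.real.
Proof.
move=> hf j k; rewrite /frame_op synth_analysis summxE; apply: rpred_sum => i _.
rewrite mxE big_ord1 adjmxE conj_Creal //; exact: rpredM.
Qed.

Lemma mulmx_real (C : numClosedFieldType) n (A : 'M[C]_n) (x : 'cV[C]_n) :
  (forall i j, A i j \is Num.real) -> (forall j, x j 0 \is Num.real) ->
  forall j, (A *m x) j 0 \is Num.real.
Proof.
move=> hA hx j; rewrite mxE; apply: rpred_sum => k _; exact: rpredM.
Qed.

Lemma adjmxB (C : numClosedFieldType) m n (A B : 'M[C]_(m, n)) :
  adjmx (A - B) = adjmx A - adjmx B.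
Proof. by apply/matrixP => i j; rewrite !mxE /= rmorphB. Qed.

Lemma sum_sub_span (C : numClosedFieldType) n N (f h : 'I_N -> 'cV[C]_n) (U : {set 'I_N}) :
  ((\sum_(i in U) f i *m adjmx (h i))^T <= span_of f U)%MS.
Proof.
rewrite linear_sum; apply: summx_sub => i hi /=; rewrite trmx_mul.
apply: submx_trans (submxMl _ _) _; apply: (sumsmx_sup i) hi _.
rewrite genmxE; exact: submx_refl.
Qed.

Lemma weight_ge0 n N (C : numClosedFieldType) (p : 'I_N -> C) i :
  (0 < n)%N -> (0 < N)%N -> prob_seq p -> 0 <= weight n p i.
Proof.
move=> n0 N0 [p01 ps]; rewrite /weight ps.
apply: mulr_ge0; first apply: divr_ge0 => //.
  by rewrite subr_ge0; case/andP: (p01 i).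
by apply: divr_ge0 => //; rewrite subr_ge0 ler1n.
Qed.

Lemma eigen_rank1 (C : numClosedFieldType) n (q : C) (u w : 'cV[C]_n) a :
  eigenvalue (q *: (u *m adjmx w)) a -> a = 0 \/ a = q * (adjmx w *m u) 0 0.
Proof.
move/eig_colP => [x hx x0].
have [->|a0] := eqVneq a 0; first by left.
right.
set s := (adjmx w *m x) 0 0.
have e1 : (q * s) *: u = a *: x by rewrite -hx -scalemxAl -mulmxA scal11 scalerA.
have e2 : q * s * (adjmx w *m u) 0 0 = a * s.
  have := congr1 (fun M => (adjmx w *m M) 0 0) e1.
  by rewrite /= -!scalemxAr !mxE => ->; rewrite /s mxE.
have s0 : s != 0.
  apply: contraNneq x0 => s0; move: e1; rewrite s0 mulr0 scale0r => /esym/eqP.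
  by rewrite scaler_eq0 (negbTE a0).
by apply: (mulIf s0); rewrite -e2 mulrAC.
Qed.

Unset Implicit Arguments. Set Strict Implicit.

Theorem proposition3p2 (C : numClosedFieldType) (realcase : bool) (n N : nat)
    (f : 'I_N -> 'cV[C]_n) (p : 'I_N -> C) (T : 'M[C]_n) :
  (0 < n)%N -> (n <= N)%N ->
  is_frame realcase f ->
  prob_seq p ->
  (forall i, \sum_j p j - p i != 0) ->
  is_pos_sqrt T (invmx (frame_op f)) ->
  let v := fun i => weight n p i * inner (T *m f i) (T *m f i) in
  let c := \big[Num.max/0]_(i < N) v i in
  let U1 := [set i | v i == c] in
  let U2 := ~: U1 in
  (span_of f U1 :&: span_of f U2 == (0 : 'M[C]_n))%MS ->
  prob_spec_opt_dual realcase p f (fun i => invmx (frame_op f) *m f i).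
Proof.
move=> n0 nN [freal fspan] pp pne [Tadj [_ TT]] v c U1 U2 hcap.
have N0 : (0 < N)%N by apply: leq_trans nN.
set S := frame_op f.
have Su : S \in unitmx by apply: frame_op_unit.
set g := fun i => invmx S *m f i.
have hSf : \sum_i f i *m adjmx (f i) = S by rewrite /S /frame_op synth_analysis.
have hadjS0 : adjmx S = S.
  by rewrite /S /frame_op adjmxM /synthesis adjmxK.
have hadjS : adjmx (invmx S) = invmx S by rewrite adjmx_inv hadjS0.
have hg1 : \sum_i g i *m adjmx (f i) = 1%:M.
  rewrite /g; under eq_bigr do rewrite -mulmxA.
  by rewrite -mulmx_sumr hSf mulVmx.
have hg2 : \sum_i f i *m adjmx (g i) = 1%:M.
  rewrite /g; under eq_bigr do rewrite adjmxM hadjS mulmxA.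
  by rewrite -mulmx_suml hSf mulmxV.
have q0 : forall i, 0 <= weight n p i by move=> i; apply: weight_ge0.
have v0 : forall i, 0 <= v i by move=> i; apply: mulr_ge0 => //; apply: inner_ge0.
have hw : forall i, inner (T *m f i) (T *m f i) = inner (g i) (f i).
  move=> i; rewrite /inner /g adjmxM Tadj -mulmxA (mulmxA T T) TT.
  by rewrite mulmxA.
have [c0 cge cle ccase] := bigmax_props (index_enum 'I_N) v0.
fold c in c0, cge, cle, ccase.
have vc : forall i, v i <= c by move=> i; apply: cge; apply: mem_index_enum.
split.
  split; last by move=> x _; rewrite !sum_inner hg1 hg2 !mul1mx.
  split.
    move=> i rc j; apply: mulmx_real; last by move=> k; apply: freal.
    by apply: invmx_real; apply: frame_op_real => a b; apply: freal.
  apply: ann_span => x hx.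
  have h0 : (invmx S)^T *m x = 0.
    by apply: (span_ann fspan) => i; rewrite mulmxA -trmx_mul; apply: hx.
  have : S^T *m ((invmx S)^T *m x) = x.
    by rewrite mulmxA -trmx_mul mulVmx // trmx1 mul1mx.
  by rewrite h0 mulmx0 => <-.
move=> g' [_ hd'].
have dreal : forall k, in_space realcase (delta_mx k 0 : 'cV[C]_n).
  by move=> k _ a; rewrite mxE realn.
have hP : \sum_i f i *m adjmx (g' i) = 1%:M.
  apply/matrixP => j k.
  have [_ h2] := hd' _ (dreal k).
  move/matrixP: h2 => /(_ j 0); rewrite sum_inner -colE !mxE eqxx andbT => ->.
  done.
have Rg : R1p p f g <= c.
  rewrite /R1p.
  have [_ _ h _] := bigmax_props (index_enum 'I_N)
     (fun i => spec_rad_ge0 (synthesis g *m Dmat n p i *m analysis f)).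
  apply: h => // i _.
  apply: spec_rad_le => // a; rewrite Mi_formula => /eigen_rank1 [->|->].
    by rewrite normr0.
  have -> : weight n p i * (adjmx (f i) *m g i) 0 0 = v i by rewrite /v hw.
  by rewrite ger0_norm.
apply: le_trans Rg _.
have [R0 Rge _ _] := bigmax_props (index_enum 'I_N)
   (fun i => spec_rad_ge0 (synthesis g' *m Dmat n p i *m analysis f)).
have [->|cne0] := eqVneq c 0; first exact: R0.
have cpos : 0 < c by rewrite lt_def cne0 c0.
have [k kU] : exists k, k \in U1.
  case: ccase => [/eqP|[k _ ck]]; first by rewrite (negbTE cne0).
  by exists k; rewrite inE -ck.
pose h := fun i => g' i - g i.
pose A := \sum_(i in U1) f i *m adjmx (h i).
pose B := \sum_(i in U2) f i *m adjmx (h i).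
have hAB : A + B = 0.
  have : \sum_i f i *m adjmx (h i) = 0.
    rewrite /h; under eq_bigr do rewrite adjmxB mulmxBr.
    by rewrite sumrB hP hg2 subrr.
  rewrite (bigID (fun i => i \in U1)) /= => <-; congr (_ + _).
  by apply: eq_bigl => i; rewrite /U2 in_setC.
have A0 : A = 0.
  have h1 := sum_sub_span f h U1.
  have h2 : (A^T <= span_of f U2)%MS.
    have -> : A = - B by apply/eqP; rewrite -addr_eq0 hAB.
    by rewrite linearN /= (eqmx_opp _) sum_sub_span.
  have : (A^T <= span_of f U1 :&: span_of f U2)%MS by rewrite sub_capmx h1 h2.
  case/andP: hcap => hc _.
  move/submx_trans => /(_ _ _ hc); rewrite submx0 trmx_eq0 => /eqP //.
pose z := fun i => inner (f i) (g' i).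
pose w := fun i => inner (g i) (f i).
have w0 : forall i, 0 <= w i by move=> i; rewrite /w -hw inner_ge0.
have hsum : \sum_(i in U1) z i = \sum_(i in U1) w i.
  have : \tr A = 0 by rewrite A0 mxtrace0.
  rewrite /A raddf_sum /=.
  have htr : forall i, \tr (f i *m adjmx (h i)) = z i - w i.
    move=> i; rewrite mxtrace_mulC /mxtrace big_ord1 /h adjmxB mulmxBl.
    rewrite (_ : forall M1 M2 : 'M[C]_1, (M1 - M2) 0 0 = M1 0 0 - M2 0 0); last first.
      by move=> M1 M2; rewrite !mxE.
    rewrite /z /w /inner /g adjmxM hadjS mulmxA.
    by [].
  under eq_bigr => i _ do rewrite htr.
  by rewrite sumrB => /eqP; rewrite subr_eq0 => /eqP.
have [i iU hi] : exists2 i, i \in U1 & c <= weight n p i * `|z i|.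
  case: (boolP [exists i in U1, c <= weight n p i * `|z i|]).
    by move/exists_inP => [i ? ?]; exists i.
  move/exists_inPn => hne; exfalso.
  have hlt : forall i, i \in U1 -> `|z i| < w i.
    move=> i iU; have vi : v i = c by move: iU; rewrite inE => /eqP.
    have qpos : 0 < weight n p i.
      rewrite lt_def q0 andbT; apply: contraNneq cne0 => q00.
      by rewrite -vi /v q00 mul0r.
    have : weight n p i * `|z i| < c.
      rewrite real_ltNge ?ger0_real ?hne //; exact: mulr_ge0.
    by rewrite -vi /v hw ltr_pM2l.
  have e1 : `|\sum_(i in U1) w i| = \sum_(i in U1) w i.
    by rewrite ger0_norm // sumr_ge0.
  have e2 : \sum_(i in U1) `|z i| < \sum_(i in U1) w i.
    apply: ltr_sum => //; apply/hasP; exists k => //; exact: mem_index_enum.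
  have := ler_norm_sum (index_enum 'I_N) z (fun i => i \in U1).
  rewrite hsum e1 => hle.
  by have := le_lt_trans hle e2; rewrite ltxx.
pose lam := weight n p i * (adjmx (f i) *m g' i) 0 0.
have hlam : `|lam| = weight n p i * `|z i|.
  rewrite /lam normrM (ger0_norm (q0 i)); congr (_ * _).
  by rewrite /z -inner_conj norm_conjC.
have lam0 : lam != 0.
  rewrite -normr_eq0 hlam; apply: contraTneq hi => ->.
  by rewrite -real_ltNge ?real0 ?gtr0_real.
have eig : eigenvalue (synthesis g' *m Dmat n p i *m analysis f) lam.
  apply/eig_colP; exists (g' i).
    by rewrite Mi_formula -scalemxAl -mulmxA scal11 scalerA.
  apply: contraNneq lam0 => g0; by rewrite /lam g0 mulmx0 mxE mulr0.
apply: le_trans hi _; rewrite -hlam.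
apply: le_trans (spec_rad_ge eig) _.
by apply: Rge; apply: mem_index_enum.
Qed.
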